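(* Let $G$ be a finite GVZ-group with $|\mathrm{cd}(G)|=2$. Let $N$ be a normal subgroup of $G$ and $\chi\in\mathrm{nl}(G)$ such that $G'\not\subseteq N$ and $[Z(\chi),G]\subseteq N$. Then $N\subseteq Z(\chi)$.
   Context: All groups are finite. $\mathrm{Irr}(G)$ is the set of complex irreducible characters of $G$, $\mathrm{nl}(G)$ the set of non-linear irreducible characters, and $\mathrm{cd}(G)=\{\chi(1):\chi\in\mathrm{Irr}(G)\}$. For a character $\chi$, $Z(\chi)=\{g\in G: |\chi(g)|=\chi(1)\}$. A nonabelian group $G$ is a GVZ-group if for every $\chi\in\mathrm{Irr}(G)$ we have $\chi(g)=0$ for all $g\in G\setminus Z(\chi)$. *)

(* Defs.v *)
From mathcomp Require Import all_boot all_order all_algebra all_fingroup all_solvable all_field all_character.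
Set Implicit Arguments. Unset Strict Implicit. Unset Printing Implicit Defensive.
Import GroupScope GRing.Theory Num.Theory.
Local Open Scope ring_scope.

Definition cd (gT : finGroupType) (G : {group gT}) : seq algC :=
  undup [seq 'chi[G]_i 1%g | i <- enum (Iirr G)].

Definition nonlinear_irr (gT : finGroupType) (G : {group gT}) (i : Iirr G) : bool :=
  'chi[G]_i 1%g != 1.

Definition GVZ (gT : finGroupType) (G : {group gT}) : Prop :=
  ~~ abelian G /\
  forall (i : Iirr G) (g : gT), g \in G -> g \notin ('Z('chi[G]_i))%CF -> 'chi[G]_i g = 0.

(* Main.v *)
Require Import Defs.
From mathcomp Require Import all_boot all_order all_algebra all_fingroup all_solvable all_field all_character.
Import GroupScope GRing.Theory Num.Theory.
Local Open Scope ring_scope.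

Lemma gvz_index (gT : finGroupType) (G : {group gT}) (i : Iirr G) :
  GVZ G -> ('chi[G]_i 1%g) ^+ 2 = #|G : 'Z('chi_i)%CF|%:R.
Proof.
case=> _ HG; have := irr1_bound i; case=> _ e; apply/eqP; rewrite e.
apply/cfun_onP => x xZ; case: (boolP (x \in G)) => Gx; first exact: HG.
exact: cfun0.
Qed.

Lemma lin_iff (gT : finGroupType) (G : {group gT}) (i : Iirr G) :
  ('chi[G]_i \is a linear_char) = ('chi_i 1%g == 1).
Proof. by rewrite qualifE /= irr_char. Qed.

Theorem mainTheorem7 (gT : finGroupType) (G N : {group gT}) (i : Iirr G) :
  GVZ G -> size (cd G) = 2%N ->
  N <| G -> nonlinear_irr i ->
  ~~ (G^`(1) \subset N)%g ->
  ([~: ('Z('chi[G]_i))%CF, G] \subset N)%g ->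
  (N \subset ('Z('chi[G]_i))%CF)%g.
Proof.
move=> gvz cd2 nNG nli nder sZ.
have [j /andP[Nj nlj]] : exists j, (N \subset cfker 'chi[G]_j) && ('chi_j 1%g != 1).
  apply/existsP; apply: contraR nder => /existsPn H.
  apply: der1_min; first by case/andP: nNG.
  apply/char_abelianP => k; rewrite -(cfMod_lin_charE _ nNG) -mod_IirrE //.
  rewrite lin_iff; have := H (mod_Iirr k); rewrite mod_IirrE // cfker_mod //=.
  by rewrite -mod_IirrE // negbK.
have deg : 'chi[G]_i 1%g = 'chi_j 1%g.
  apply/eqP; apply: contraT => neq.
  have : (size ((1%R : algC) :: [:: 'chi[G]_i 1%g; 'chi_j 1%g]) <= size (cd G))%N.
    apply: uniq_leq_size.
      rewrite /= !inE negb_or neq andbT; move: nli nlj; rewrite /nonlinear_irr !(eq_sym 1) => -> ->. by [].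
    have mem k : 'chi[G]_k 1%g \in cd G.
      by rewrite mem_undup; apply/mapP; exists k; rewrite ?mem_enum.
    move=> x; rewrite !inE => /or3P[] /eqP ->; rewrite ?mem //.
    by have := mem 0; rewrite irr0 cfun11.
  by rewrite cd2.
set K := cfker 'chi[G]_j.
have nKG : K <| G := cfker_normal _.
have sZZ : ('Z('chi[G]_i)%CF \subset 'Z('chi[G]_j)%CF).
  rewrite -(quotientSGK _ (normal_sub (cfker_center_normal _))); last first.
    exact: subset_trans (cfcenter_sub _) (normal_norm nKG).
  rewrite cfcenter_eq_center /center subsetI quotientS ?cfcenter_sub //.
  apply: quotient_cents2r; exact: subset_trans sZ Nj.
have eqZ : 'Z('chi[G]_i)%CF = 'Z('chi[G]_j)%CF.
  apply/eqP; rewrite eqEcard sZZ /=.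
  have := @gvz_index _ _ i gvz; rewrite deg gvz_index // => /eqP; rewrite eqr_nat => /eqP e.
  have := Lagrange (cfcenter_sub 'chi[G]_i); have := Lagrange (cfcenter_sub 'chi[G]_j).
  rewrite e => <- /eqP; rewrite eqn_pmul2r ?indexg_gt0 // => /eqP ->.
  done.
by rewrite eqZ; apply: subset_trans Nj (normal_sub (cfker_center_normal _)).
Qed.
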